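(* Let $X$ be an $n$-dimensional toric Fano variety with fan $\Sigma_X$. Suppose that for every generator $x\in G(\Sigma_X)$ there are at most two primitive collections of order two containing $x$, and if there are exactly two, they are $\{x,-x\}$ and $\{x,y\}$ with $-y\notin G(\Sigma_X)$ and $-x-y\notin G(\Sigma_X)$. Then $\Sigma_X$ has at most $\frac{3}{4}f_0$ primitive collections of order two, i.e. $\binom{f_0}{2}-f_1\leq\frac34 f_0$, where $f_0$ is the number of rays and $f_1$ the number of $2$-dimensional cones of $\Sigma_X$.
   Context: $X$ is a smooth projective toric variety with ample anticanonical divisor, fan $\Sigma_X$, primitive ray generators $G(\Sigma_X)$. A primitive collection is a set of generators not spanning a cone of $\Sigma_X$ while every proper subset does; its order is its cardinality. (A set of two generators is a primitive collection exactly when they do not span a cone of $\Sigma_X$.) *)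

(* Defs.v *)
(* Combinatorial encoding of a smooth projective toric
   variety with ample anticanonical divisor via its fan. *)
From HB Require Import structures.
From mathcomp Require Import all_boot all_order all_algebra.
Set Implicit Arguments. Unset Strict Implicit. Unset Printing Implicit Defensive.
Import Order.TTheory GRing.Theory Num.Theory.
Local Open Scope ring_scope.

(* Fan: given by its set of maximal cones S : {set {set 'I_m}}; a cone is
   spanned by a subset of the generators.  The cones of the fan are the
   faces (= subsets, the fan being simplicial) of the maximal cones. *)

Definition ratv (n : nat) (x : 'rV[int]_n) : 'rV[rat]_n := map_mx (fun z => z%:~R) x.

Definition cone (n m : nat) (v : 'I_m -> 'rV[int]_n) (A : {set 'I_m})
    (x : 'rV[rat]_n) : Prop :=
  exists lam : 'I_m -> rat,
    (forall i, 0 <= lam i) /\ (forall i, i \notin A -> lam i = 0) /\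
    x = \sum_i lam i *: ratv (v i).

Definition dotr (n : nat) (u w : 'rV[rat]_n) : rat := (u *m w^T) 0 0.

Definition smooth_complete_fan (n m : nat) (v : 'I_m -> 'rV[int]_n)
    (S : {set {set 'I_m}}) : Prop :=
  injective v /\
  (forall i, exists2 s, s \in S & i \in s) /\
  (forall s, s \in S -> exists f : 'I_n -> 'I_m,
      [set f k | k in 'I_n] = s /\
      (\det (\matrix_(k < n, j < n) v (f k) 0 j) = 1 \/
       \det (\matrix_(k < n, j < n) v (f k) 0 j) = -1)) /\
  (forall s t, s \in S -> t \in S ->
      forall x, cone v s x -> cone v t x -> cone v (s :&: t) x) /\
  (* completeness: the support of the fan is all of R^n (equivalently Q^n) *)
  (forall x : 'rV[rat]_n, exists2 s, s \in S & cone v s x).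

(* Ampleness of the anticanonical divisor -K = sum_rho D_rho, via its
   Cartier data: for each maximal cone s there is m_s with <m_s,v_i> = -1
   for i in s, and ampleness means <m_s,v_j> > -1 for j not in s.
   (Here u = -m_s.) *)
Definition anticanonical_ample (n m : nat) (v : 'I_m -> 'rV[int]_n)
    (S : {set {set 'I_m}}) : Prop :=
  forall s, s \in S -> exists u : 'rV[rat]_n,
    (forall i, i \in s -> dotr u (ratv (v i)) = 1) /\
    (forall j, j \notin s -> dotr u (ratv (v j)) < 1).

Definition smooth_fano_fan (n m : nat) (v : 'I_m -> 'rV[int]_n)
    (S : {set {set 'I_m}}) : Prop :=
  smooth_complete_fan v S /\ anticanonical_ample v S.

Definition spans_cone (m : nat) (S : {set {set 'I_m}}) (A : {set 'I_m}) : bool :=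
  [exists s in S, A \subset s].

Definition primitive_collection (m : nat) (S : {set {set 'I_m}}) (A : {set 'I_m}) : bool :=
  ~~ spans_cone S A && [forall B : {set 'I_m}, (B \proper A) ==> spans_cone S B].

Definition prim2_partners (m : nat) (S : {set {set 'I_m}}) (i : 'I_m) : {set 'I_m} :=
  [set j | (j != i) && primitive_collection S [set i; j]].

Definition prim2_collections (m : nat) (S : {set {set 'I_m}}) : {set {set 'I_m}} :=
  [set A : {set 'I_m} | (#|A| == 2)%N && primitive_collection S A].

Definition f1 (m : nat) (S : {set {set 'I_m}}) : nat :=
  #|[set A : {set 'I_m} | (#|A| == 2)%N && spans_cone S A]|.

(* Main.v *)
Require Import Defs.
From mathcomp Require Import all_boot all_order all_algebra.
From mathcomp Require Import lra zify.
Import GRing.Theory Num.Theory.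
Local Open Scope ring_scope.

Lemma partnersC (m : nat) (S : {set {set 'I_m}}) i j :
  (j \in prim2_partners S i) = (i \in prim2_partners S j).
Proof. by rewrite !inE eq_sym setUC. Qed.

Lemma partners_card (m : nat) (S : {set {set 'I_m}}) x :
  #|[set A in prim2_collections S | x \in A]| = #|prim2_partners S x|.
Proof.
have -> : [set A in prim2_collections S | x \in A] =
          (fun j => [set x; j]) @: prim2_partners S x.
  apply/setP => A; rewrite !inE; apply/andP/imsetP.
  - case=> /andP[/cards2P[a [b [ab ->]]] pA] xA.
    move: xA; rewrite !inE => /orP[]/eqP xa; subst x.
      exists b; last reflexivity.
      rewrite !inE eq_sym ab; exact: pA.
    exists a; last exact: setUC.
    rewrite !inE ab setUC; exact: pA.
  - case=> j; rewrite inE => /andP[jx pj] ->.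
    rewrite cards2 eq_sym [x == j]eq_sym jx; split; first exact: pj.
    by rewrite !inE eqxx.
apply: card_in_imset => j k; rewrite !inE => /andP[jx _] /andP[kx _] E.
have : k \in [set x; j] by rewrite E !inE eqxx orbT.
rewrite !inE (negbTE kx) /= => /eqP ->; reflexivity.
Qed.

Lemma handshake (m : nat) (S : {set {set 'I_m}}) :
  (2 * #|prim2_collections S| = \sum_x #|prim2_partners S x|)%N.
Proof.
rewrite mulnC -sum_nat_const.
transitivity (\sum_(A in prim2_collections S) \sum_(x in A) 1)%N.
  apply: eq_bigr => A; rewrite inE sum1_card => /andP[/eqP -> _].
  reflexivity.
rewrite (exchange_big_dep predT) //=.
apply: eq_bigr => x _; rewrite sum1dep_card -partners_card.
by apply: eq_card => A; rewrite !inE.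
Qed.

Section Main.
Variables (n m : nat) (v : 'I_m -> 'rV[int]_n) (S : {set {set 'I_m}}).
Hypothesis H : forall x : 'I_m,
     (#|prim2_partners S x| <= 2)%N /\
     (#|prim2_partners S x| = 2%N ->
        exists x' y : 'I_m,
          prim2_partners S x = [set x'; y] /\
          v x' = - v x /\
          (forall k, v k <> - v y) /\
          (forall k, v k <> - v x - v y)).

Local Notation deg x := #|prim2_partners S x|.

Lemma key x : deg x = 2%N -> exists y, (y \in prim2_partners S x) && (deg y == 1%N).
Proof.
move=> dx; case: (H x) => _ /(_ dx) [x' [y [Px [_ [ny _]]]]].
exists y; have yP : y \in prim2_partners S x by rewrite Px !inE eqxx orbT.
rewrite yP /=.
have xy : x \in prim2_partners S y by rewrite -partnersC.
have : (0 < deg y)%N by apply/card_gt0P; exists x.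
case: (H y) => le2 h2.
case E: (deg y) => [|[|[|k]]] //= _.
- case: (h2 E) => z [w [_ [vz _]]]; case: (ny z vz).
- by rewrite E in le2.
Qed.

Definition f x := odflt x [pick y in prim2_partners S x | deg y == 1%N].

Lemma fP x : deg x = 2%N -> (f x \in prim2_partners S x) && (deg (f x) == 1%N).
Proof.
move=> dx; rewrite /f; case: pickP => [y /andP[-> ->] //|none].
case: (key x dx) => y /andP[a b]; have := none y; rewrite a b; discriminate.
Qed.

Lemma D21 : (#|[set x | deg x == 2%N]| <= #|[set x | deg x == 1%N]|)%N.
Proof.
rewrite -(card_in_imset (f := f)).
  apply: subset_leq_card; apply/subsetP => y /imsetP [x]; rewrite inE => /eqP dx ->.
  by rewrite inE; case/andP: (fP x dx).
move=> x1 x2; rewrite !inE => /eqP d1 /eqP d2 E.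
case/andP: (fP x1 d1) => p1 /cards1P [z Pz].
case/andP: (fP x2 d2); rewrite -E => p2 _.
move: p1 p2; rewrite (partnersC _ _ x1) (partnersC _ _ x2) Pz !inE.
by move=> /eqP -> /eqP ->.
Qed.

Lemma sum_ind (T : finType) (P : pred T) : (\sum_(x : T) (P x : nat) = #|[set x | P x]|)%N.
Proof. rewrite -sum1dep_card [RHS]big_mkcond /=; apply: eq_bigr => x _; by case: (P x). Qed.

Lemma degsum : (2 * \sum_x deg x <= 3 * m)%N.
Proof.
have pt : forall x, (2 * deg x + 3 * (deg x == 0%N) + (deg x == 1%N) <= 3 + (deg x == 2%N))%N.
  move=> x; case: (H x) => le2 _; move: le2; case: (deg x) => [|[|[|k]]] //.
have : (\sum_x (2 * deg x + 3 * (deg x == 0%N) + (deg x == 1%N)) <= \sum_x (3 + (deg x == 2%N)))%N.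
  by apply: leq_sum => x _; exact: pt x.
rewrite !big_split /= !sum_ind !sum_nat_const !card_ord.
move: D21; set a := (\sum_(i < m) _)%N; set d0 := #|[set x | _ == 0%N]|; set d1 := #|[set x | _ == 1%N]|; set d2 := #|[set x | _ == 2%N]|; clearbody a d0 d1 d2; clear pt; lia.
Qed.

End Main.

Lemma small_spans (m : nat) (S : {set {set 'I_m}}) (B : {set 'I_m}) (i : 'I_m) :
  (forall i, exists2 s, s \in S & i \in s) -> (#|B| <= 1)%N -> spans_cone S B.
Proof.
move=> rays; rewrite leq_eqVlt ltnS leqn0 => /orP[/cards1P [j ->]|/eqP/cards0_eq ->].
  case: (rays j) => s sS js; apply/existsP; exists s; rewrite sS /=.
  by rewrite sub1set.
case: (rays i) => s sS _; apply/existsP; exists s; rewrite sS /=.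
by rewrite sub0set.
Qed.

Theorem lemma3p4 (n m : nat) (v : 'I_m -> 'rV[int]_n) (S : {set {set 'I_m}}) :
  smooth_fano_fan v S ->
  (forall x : 'I_m,
     (#|prim2_partners S x| <= 2)%N /\
     (#|prim2_partners S x| = 2%N ->
        exists x' y : 'I_m,
          prim2_partners S x = [set x'; y] /\
          v x' = - v x /\
          (forall k, v k <> - v y) /\
          (forall k, v k <> - v x - v y))) ->
  (4 * #|prim2_collections S| <= 3 * m)%N /\
  ('C(m, 2)%:R - (f1 S)%:R <= (3 / 4 : rat) * m%:R).
Proof.
move=> [[_ [rays _]] _] H.
have hs := @handshake m S.
have ds := @degsum n m v S H.
have P4 : (4 * #|prim2_collections S| <= 3 * m)%N.
  by rewrite (_ : 4 = 2 * 2)%N // -mulnA hs.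
split; first exact: P4.
have Ec : 'C(m, 2) = (f1 S + #|prim2_collections S|)%N.
  rewrite -{1}(card_ord m) -card_draws.
  rewrite -(cardsID [set A : {set 'I_m} | spans_cone S A]).
  congr (_ + _)%N; apply: eq_card => A; rewrite !inE //.
  apply/andP/andP => [[nsp /eqP c2]|[c2 /andP[nsp _]]]; split.
  - by rewrite c2.
  - rewrite /primitive_collection nsp /=; apply/forallP => B; apply/implyP => BA.
    have := proper_card BA; rewrite c2 ltnS.
    have : (0 < #|A|)%N by rewrite c2.
    case/card_gt0P => i _.
    exact: small_spans.
  - exact: nsp.
  - exact: c2.
rewrite Ec natrD addrAC subrr add0r.
have : ((4 * #|prim2_collections S|)%:R <= (3 * m)%:R :> rat) by rewrite ler_nat.
rewrite !natrM; lra.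
Qed.
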